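(* Let $0 \leq a \leq b$. For any $t > 0$, \[ \mathcal{R}_I(t,a,b) = O\!\left(\frac1t\right). \] Whenever $b \leq \frac14$, setting $\delta_b = \frac14 - b$, \[ \mathcal{R}_I(t,a,b) = O\!\left(\frac{e^{-\frac34 t^2\delta_b^2}}{t^{\frac32}}\right). \]
   Context: For $0\le a\le b$ and $t>0$, define $f_t:[0,\infty)\to\mathbb{R}$ by $f_t(\lambda) = \frac{t}{\sqrt\pi}\int_a^b \exp(-t^2(\lambda-\mu)^2)\,d\mu$ (the convolution of $\mathbf{1}_{[a,b]}$ with the normalised Gaussian $\frac{t}{\sqrt\pi}e^{-t^2x^2}$), and \[ \mathcal{R}_I(t,a,b) = \frac{1}{4\pi}\int_{\frac14}^{+\infty}\big(f_t(\lambda) - \mathbf{1}_{[a,b]}(\lambda)\big)\tanh\!\Big(\pi\sqrt{\lambda-\tfrac14}\Big)\,d\lambda. \] $T_1 = O(T_2)$ means $|T_1|\le CT_2$ with a universal constant $C$ independent of $t,a,b$. *)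

(* Defs.v *)
From HB Require Import structures.
From mathcomp Require Import all_boot all_order all_algebra.
From mathcomp Require Import all_classical all_reals all_analysis.
From mathcomp Require Import Rstruct Rstruct_topology.
From Stdlib Require Import Rdefinitions.
Set Implicit Arguments. Unset Strict Implicit. Unset Printing Implicit Defensive.
Import Order.TTheory GRing.Theory Num.Theory.
Import numFieldNormedType.Exports.
Local Open Scope classical_set_scope.
Local Open Scope ring_scope.

Definition RR := Rdefinitions.R.

Definition tanh (x : RR) : RR := (expR x - expR (- x)) / (expR x + expR (- x)).

Definition f_t (t a b lam : RR) : RR :=
  t / Num.sqrt pi *
  Rintegral (@lebesgue_measure RR) `[a, b]
    (fun mu : RR => expR (- (t ^+ 2 * (lam - mu) ^+ 2))).

Definition R_I (t a b : RR) : RR :=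
  (4 * pi)^-1 *
  Rintegral (@lebesgue_measure RR) `[4^-1, +oo[
    (fun lam : RR => (f_t t a b lam - \1_(`[a, b]) lam)
                      * tanh (pi * Num.sqrt (lam - 4^-1))).

(* Main.v *)
Require Import Defs.
From HB Require Import structures.
From mathcomp Require Import all_boot all_order all_algebra.
From mathcomp Require Import all_classical all_reals all_analysis.
From mathcomp Require Import Rstruct Rstruct_topology.
From mathcomp Require Import ring lra.
From mathcomp Require Import measurable_realfun.
Import Order.TTheory GRing.Theory Num.Theory.
Import numFieldNormedType.Exports.
Local Open Scope classical_set_scope.
Local Open Scope ring_scope.

Notation R := (Real.sort Rdefinitions.R).
Local Notation mu := (@lebesgue_measure R).
Definition gk (t m x : R) := t / Num.sqrt pi * expR (- (t ^+ 2 * (x - m) ^+ 2)).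

Lemma gk_normal t m : 0 < t -> gk t m = normal_pdf m ((Num.sqrt 2 * t)^-1).
Proof.
move=> t0.
have s0 : (Num.sqrt 2 * t)^-1 != 0 by rewrite invr_eq0 mulf_neq0 ?gt_eqF ?sqrtr_gt0 //.
rewrite normal_pdfE //; apply/funext => x; rewrite /normal_peak /normal_fun /gk.
have s2 : ((Num.sqrt 2 * t)^-1) ^+ 2 *+ 2 = (t ^+ 2)^-1.
  rewrite exprVn exprMn sqr_sqrtr // -mulr_natr; field.
  by rewrite gt_eqF.
rewrite -mulrnAl s2 sqrtrM ?invr_ge0 ?sqr_ge0 // sqrtrV ?sqr_ge0 // sqrtr_sqr gtr0_norm //.
rewrite invfM invrK invrK mulrC.
rewrite mulrC; congr (_ * _); congr expR.
by rewrite mulNr mulrC.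
Qed.

Lemma gk_ge0 t m x : 0 <= t -> 0 <= gk t m x.
Proof. by move=> t0; rewrite /gk mulr_ge0 ?expR_ge0 ?divr_ge0 ?sqrtr_ge0. Qed.

Lemma measurable_gk t m : 0 < t -> measurable_fun setT (gk t m).
Proof. by move=> t0; rewrite gk_normal //; exact: measurable_normal_pdf. Qed.

Lemma integralT_gk t m : 0 < t -> (\int[mu]_x (gk t m x)%:E = 1)%E.
Proof. by move=> t0; rewrite gk_normal //; exact: integral_normal_pdf. Qed.

Lemma integral_gk_le1 t m (D : set R) : 0 < t -> measurable D ->
  (\int[mu]_(x in D) (gk t m x)%:E <= 1)%E.
Proof.
move=> t0 mD; rewrite -(integralT_gk t m t0).
apply: ge0_subset_integral => //.
- by apply/measurable_EFinP; exact: measurable_gk.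
- by move=> x _; rewrite lee_fin gk_ge0 // ltW.
Qed.
Lemma int_mono_ge0 (D : set R) (f g : R -> \bar R) :
  (forall x, D x -> 0 <= f x)%E -> (forall x, D x -> f x <= g x)%E ->
  (\int[mu]_(x in D) f x <= \int[mu]_(x in D) g x)%E.
Proof.
move=> f0 fg.
have g0 : forall x, D x -> (0 <= g x)%E by move=> x Dx; exact: le_trans (f0 x Dx) (fg x Dx).
rewrite !ge0_integralE//; apply: ge_ereal_sup => _ [h /= hf <-].
apply: ereal_sup_ubound => /=; exists h => //= x.
apply: (le_trans (hf x)); rewrite /patch; case: ifP => // /set_mem Dx; exact: fg.
Qed.

Lemma gk_split t m c x : 0 <= t -> 0 <= (m - c) * (c - x) ->
  gk t m x <= expR (- (t ^+ 2 * (m - c) ^+ 2)) * gk t c x.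
Proof.
move=> t0 h; rewrite /gk [in X in _ <= X]mulrCA; apply: ler_wpM2l.
  by rewrite divr_ge0 ?sqrtr_ge0.
rewrite -exp.expRD ler_expR.
have h2 : 0 <= t ^+ 2 * ((m - c) * (c - x)) by rewrite mulr_ge0 ?sqr_ge0.
nra.
Qed.

Lemma int_gk_shift t m c (D : set R) : 0 < t -> measurable D ->
  (forall x, D x -> 0 <= (m - c) * (c - x)) ->
  (\int[mu]_(x in D) (gk t m x)%:E <= (expR (- (t ^+ 2 * (m - c) ^+ 2)))%:E)%E.
Proof.
move=> t0 mD h.
apply: (@le_trans _ _ (\int[mu]_(x in D) ((expR (- (t ^+ 2 * (m - c) ^+ 2)))%:E * (gk t c x)%:E))%E).
  apply: int_mono_ge0 => x Dx; first by rewrite lee_fin gk_ge0 // ltW.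
  by rewrite -EFinM lee_fin; apply: gk_split; [exact: ltW | exact: h].
rewrite ge0_integralZl_EFin //; first last.
- by apply/measurable_EFinP; apply: measurable_funS (measurable_gk t c t0).
- by move=> x _; rewrite lee_fin gk_ge0 // ltW.
rewrite -[X in (_ <= X)%E]mule1; apply: lee_wpmul2l; first by rewrite lee_fin expR_ge0.
exact: integral_gk_le1.
Qed.

Lemma gk_int_fin t m (D : set R) : 0 < t -> measurable D ->
  (\int[mu]_(x in D) (gk t m x)%:E)%E \is a fin_num.
Proof.
move=> t0 mD; rewrite ge0_fin_numE; last by apply: integral_ge0 => x _; rewrite lee_fin gk_ge0 // ltW.
apply: le_lt_trans (integral_gk_le1 t m D t0 mD) _; exact: ltry.
Qed.

Lemma sqrtpi_gt0 : 0 < Num.sqrt (pi : R).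
Proof. by rewrite sqrtr_gt0 pi_gt0. Qed.

Lemma ft_eq t a b lam : 0 < t ->
  f_t t a b lam = fine (\int[mu]_(x in `[a, b]) (gk t lam x)%:E)%E.
Proof.
move=> t0; rewrite /f_t /Rintegral.
have -> : (\int[mu]_(x in `[a, b]) (expR (- (t ^+ 2 * (lam - x) ^+ 2)))%:E)%E =
  ((Num.sqrt pi / t)%:E * \int[mu]_(x in `[a, b]) (gk t lam x)%:E)%E.
  rewrite -ge0_integralZl_EFin //; last 3 first.
  - by move=> x _; rewrite lee_fin gk_ge0 // ltW.
  - by apply/measurable_EFinP; apply: measurable_funS (measurable_gk t lam t0).
  - by rewrite divr_ge0 ?sqrtr_ge0 // ltW.
  apply: eq_integral => x _; rewrite -EFinM /gk; congr EFin.
  have sp := sqrtpi_gt0.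
  rewrite (_ : (lam - x) ^+ 2 = (x - lam) ^+ 2); last by rewrite -sqrrN opprB.
  by field; rewrite !gt_eqF.
rewrite -(fineK (gk_int_fin t lam `[a, b] t0 (measurable_itv `[a, b]))) -EFinM /=.
have sp := sqrtpi_gt0.
by field; rewrite !gt_eqF.
Qed.

Lemma ft_right t a b lam : 0 < t -> b <= lam ->
  f_t t a b lam <= expR (- (t ^+ 2 * (lam - b) ^+ 2)).
Proof.
move=> t0 blam; rewrite ft_eq // -lee_fin fineK; last exact: gk_int_fin.
apply: int_gk_shift => // x; rewrite /= in_itv /= => /andP[ax xb].
by rewrite mulr_ge0 // subr_ge0.
Qed.

Lemma ft_left t a b lam : 0 < t -> lam <= a ->
  f_t t a b lam <= expR (- (t ^+ 2 * (lam - a) ^+ 2)).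
Proof.
move=> t0 lama; rewrite ft_eq // -lee_fin fineK; last exact: gk_int_fin.
apply: int_gk_shift => // x; rewrite /= in_itv /= => /andP[ax xb].
by rewrite mulr_le0 // subr_le0.
Qed.

Lemma ft_ge0 t a b lam : 0 < t -> 0 <= f_t t a b lam.
Proof.
move=> t0; rewrite ft_eq //; apply: fine_ge0; apply: integral_ge0 => x _.
by rewrite lee_fin gk_ge0 // ltW.
Qed.

Lemma ft_in t a b lam : 0 < t -> a <= lam <= b ->
  f_t t a b lam <= 1 /\
  1 - f_t t a b lam <= expR (- (t ^+ 2 * (lam - a) ^+ 2)) + expR (- (t ^+ 2 * (lam - b) ^+ 2)).
Proof.
move=> t0 /andP[alam lamb].
have ab : a <= b by apply: le_trans lamb.
have mf : measurable_fun setT (EFin \o gk t lam) by apply/measurable_EFinP; exact: measurable_gk.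
have f0 : forall x, (0 <= (gk t lam x)%:E)%E by move=> x; rewrite lee_fin gk_ge0 // ltW.
have eT : [set: R] = `]-oo, a[ `|` (`[a, b] `|` `]b, +oo[).
  apply/seteqP; split => x // _ /=.
  case: (ltP x a) => xa; [left | right]; first by rewrite in_itv /= xa.
  case: (leP x b) => xb; [left | right]; first by rewrite in_itv /= xa xb.
  by rewrite in_itv /= xb.
have := integralT_gk t lam t0.
rewrite eT ge0_integral_setU //; first last.
- rewrite disj_set2E; apply/eqP/seteqP; split => x // [] /=.
  rewrite !in_itv /= => xa [] /andP[]; last by move=> bx _; have := lt_trans bx xa; rewrite ltNge ab.
  by move=> ax _; move: (le_lt_trans ax xa); rewrite ltxx.
- by move=> x _; exact: f0.
- exact: measurable_funS mf.
- exact: measurableU.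
rewrite ge0_integral_setU //; first last.
- rewrite disj_set2E; apply/eqP/seteqP; split => x // [] /=.
  rewrite !in_itv /= andbT => /andP[_ xb] bx; move: (le_lt_trans xb bx); rewrite ltxx //.
- by move=> x _; exact: f0.
- exact: measurable_funS mf.
have h1 : (\int[mu]_(x in `]-oo, a[) (gk t lam x)%:E <= (expR (- (t ^+ 2 * (lam - a) ^+ 2)))%:E)%E.
  apply: int_gk_shift => // x; rewrite /= in_itv /= => xa.
  by rewrite mulr_ge0 // subr_ge0 // ltW.
have h2 : (\int[mu]_(x in `]b, +oo[) (gk t lam x)%:E <= (expR (- (t ^+ 2 * (lam - b) ^+ 2)))%:E)%E.
  apply: int_gk_shift => // x; rewrite /= in_itv /= andbT => bx.
  by rewrite mulr_le0 // subr_le0 // ltW.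
have g1 : (0 <= \int[mu]_(x in `]-oo, a[) (gk t lam x)%:E)%E by apply: integral_ge0 => x _; exact: f0.
have g2 : (0 <= \int[mu]_(x in `]b, +oo[) (gk t lam x)%:E)%E by apply: integral_ge0 => x _; exact: f0.
have g3 : (0 <= \int[mu]_(x in `[a, b]) (gk t lam x)%:E)%E by apply: integral_ge0 => x _; exact: f0.
rewrite ft_eq //.
move: h1 h2 g1 g2 g3.
rewrite -(fineK (gk_int_fin t lam `]-oo, a[ t0 (measurable_itv _))).
rewrite -(fineK (gk_int_fin t lam `]b, +oo[ t0 (measurable_itv _))).
rewrite -(fineK (gk_int_fin t lam `[a, b] t0 (measurable_itv _))).
rewrite -!EFinD /= !lee_fin => h1 h2 g1 g2 g3 [] e.
split; lra.
Qed.
Lemma tanh_le1 y : `|tanh y| <= 1.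
Proof.
rewrite /tanh; have e1 := expR_gt0 y; have e2 := expR_gt0 (- y).
rewrite normrM normfV (gtr0_norm (addr_gt0 e1 e2)) ler_pdivrMr ?addr_gt0 // mul1r.
rewrite ler_norml; apply/andP; split; lra.
Qed.

Lemma tanh_le2 y : 0 <= y -> `|tanh y| <= 2 * y.
Proof.
move=> y0; rewrite /tanh; have e1 := expR_gt0 y; have e2 := expR_gt0 (- y).
have AB : expR y * expR (- y) = 1 by rewrite -exp.expRD subrr exp.expR0.
have h1 := expR_ge1Dx y; have h2 := expR_ge1Dx (- y).
have n0 : 0 <= expR y - expR (- y).
  by rewrite subr_ge0 ler_expR; lra.
rewrite normrM normfV (gtr0_norm (addr_gt0 e1 e2)) (ger0_norm n0).
rewrite ler_pdivrMr ?addr_gt0 //.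
have k1 : 0 <= expR y * (expR (- y) - (1 - y)) by apply: mulr_ge0; lra.
have k2 : 0 <= y * (expR y - 1) by apply: mulr_ge0; lra.
have k3 : 0 <= y * expR (- y) by apply: mulr_ge0; lra.
nra.
Qed.
Lemma absRint_le (D : set R) (g h : R -> R) (M : R) :
  (forall x, D x -> `|g x| <= h x) ->
  (\int[mu]_(x in D) (h x)%:E <= M%:E)%E -> `|Rintegral mu D g| <= M.
Proof.
move=> gh hM.
have h0 x : D x -> 0 <= h x by move=> Dx; exact: le_trans (normr_ge0 _) (gh x Dx).
have Hp : (\int[mu]_(x in D) ((EFin \o g)^\+ x) <= M%:E)%E.
  apply: le_trans hM; apply: int_mono_ge0 => x Dx; first exact: funepos_ge0.
  rewrite funeposE /= ge_max !lee_fin h0 // andbT.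
  by have := gh x Dx; rewrite ler_norml => /andP[].
have Hn : (\int[mu]_(x in D) ((EFin \o g)^\- x) <= M%:E)%E.
  apply: le_trans hM; apply: int_mono_ge0 => x Dx; first exact: funeneg_ge0.
  rewrite funenegE /= ge_max !lee_fin h0 // andbT.
  by have := gh x Dx; rewrite ler_norml => /andP[+ _]; rewrite lerNl.
have P0 : (0 <= \int[mu]_(x in D) ((EFin \o g)^\+ x))%E.
  by apply: integral_ge0 => x _; exact: funepos_ge0.
have N0 : (0 <= \int[mu]_(x in D) ((EFin \o g)^\- x))%E.
  by apply: integral_ge0 => x _; exact: funeneg_ge0.
rewrite /Rintegral integralE.
move: P0 Hp N0 Hn.
set P := (\int[mu]_(x in D) _)%E; set N := (\int[mu]_(x in D) _)%E.
move=> P0 PM N0 NM.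
have Pf : P \is a fin_num by rewrite ge0_fin_numE// (le_lt_trans PM) ?ltry.
have Nf : N \is a fin_num by rewrite ge0_fin_numE// (le_lt_trans NM) ?ltry.
move: P0 PM N0 NM; rewrite -(fineK Pf) -(fineK Nf) -EFinB /= !lee_fin.
move=> *; rewrite ler_norml; apply/andP; split; lra.
Qed.

Notation E t u := (expR (- (t ^+ 2 * u ^+ 2))).

Lemma diff_bound t a b lam : 0 < t -> a <= b ->
  `|f_t t a b lam - \1_(`[a, b]) lam| <= E t (lam - a) + E t (lam - b).
Proof.
move=> t0 ab; have e1 := expR_gt0 (- (t ^+ 2 * (lam - a) ^+ 2)).
have e2 := expR_gt0 (- (t ^+ 2 * (lam - b) ^+ 2)).
have f0 := ft_ge0 t a b lam t0.
rewrite indicE mem_setE in_itv /=.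
case: (ltP lam a) => [la|al].
  have := ft_left t a b lam t0 (ltW la).
  rewrite /= subr0 ger0_norm //.
  lra.
case: (leP lam b) => [lb|bl].
  have alb : a <= lam <= b by rewrite al lb.
  have [h1 h2] := ft_in t a b lam t0 alb.
  by rewrite /= ler0_norm ?subr_le0 // opprB.
have := ft_right t a b lam t0 (ltW bl).
rewrite andbF /= subr0 ger0_norm //.
lra.
Qed.

Lemma diff_bound_right t a b lam : 0 < t -> a <= b -> b <= lam ->
  `|f_t t a b lam - \1_(`[a, b]) lam| <= E t (lam - b).
Proof.
move=> t0 ab bl.
have f0 := ft_ge0 t a b lam t0.
rewrite indicE mem_setE in_itv /=.
case: (eqVneq lam b) => [lb|lb].
  subst lam.
  have alb : a <= b <= b by rewrite ab le_refl.
  have [h1 h2] := ft_in t a b b t0 alb.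
  rewrite le_refl ab /= subrr expr0n /= mulr0 oppr0 exp.expR0 mulr1n.
  rewrite ler0_norm ?subr_le0 //; lra.
have blt : b < lam by rewrite lt_neqAle eq_sym lb bl.
have := ft_right t a b lam t0 bl.
rewrite (lt_geF blt) andbF /= subr0 ger0_norm //.
Qed.

Lemma sqrt_gauss (t x : R) : 0 < t -> 0 <= x ->
  Num.sqrt x * E t x <= (Num.sqrt t)^-1 * expR (- ((t / Num.sqrt 2) ^+ 2 * x ^+ 2)).
Proof.
move=> t0 x0.
have st : 0 < Num.sqrt t by rewrite sqrtr_gt0.
have -> : (t / Num.sqrt 2) ^+ 2 * x ^+ 2 = (t ^+ 2 * x ^+ 2) / 2.
  by rewrite exprMn exprVn sqr_sqrtr //; field.
set u : R := t ^+ 2 * x ^+ 2.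
have -> : expR (- u) = expR (- (u / 2)) * expR (- (u / 2)).
  by rewrite -exp.expRD; congr expR; field.
have -> : Num.sqrt x = Num.sqrt (t * x) / Num.sqrt t.
  by rewrite sqrtrM ?(ltW t0) //; field; rewrite gt_eqF.
have k : Num.sqrt (t * x) * expR (- (u / 2)) <= 1.
  rewrite expRN mulrC -ler_pdivlMl ?expR_gt0 //; last by rewrite invr_gt0 expR_gt0.
  rewrite invrK mulr1 -[X in _ <= X]gtr0_norm ?expR_gt0 //.
  rewrite -sqrtr_sqr ler_sqrt ?sqr_ge0 // -expRM_natl.
  rewrite (_ : 2%:R * (u / 2) = u); last by field.
  apply: le_trans (expR_ge1Dx u).
  rewrite /u; nra.
have e0 := expR_gt0 (- (u / 2)).
have sti : 0 <= (Num.sqrt t)^-1 by rewrite invr_ge0 ltW.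
have := ler_wpM2r (mulr_ge0 sti (ltW e0)) k.
rewrite mul1r; apply: le_trans; rewrite le_eqVlt; apply/orP; left; apply/eqP.
ring.
Qed.

Lemma int_Kgk_le K s m (D : set R) : 0 < s -> measurable D -> 0 <= K ->
  (\int[mu]_(x in D) (K * gk s m x)%:E <= K%:E)%E.
Proof.
move=> s0 mD k0.
have -> : (\int[mu]_(x in D) (K * gk s m x)%:E = K%:E * \int[mu]_(x in D) (gk s m x)%:E)%E.
  rewrite -ge0_integralZl_EFin //.
  - by move=> x _; rewrite lee_fin; apply: gk_ge0; exact: ltW.
  - by apply/measurable_EFinP; apply: measurable_funS (measurable_gk s m s0).
rewrite -[X in (_ <= X)%E]mule1; apply: lee_wpmul2l; first by rewrite lee_fin.
exact: integral_gk_le1.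
Qed.

Lemma absRint_gk2 (D : set R) (g : R -> R) s m1 m2 K1 K2 : 0 < s -> measurable D ->
  0 <= K1 -> 0 <= K2 ->
  (forall x, D x -> `|g x| <= K1 * gk s m1 x + K2 * gk s m2 x) ->
  `|Rintegral mu D g| <= K1 + K2.
Proof.
move=> s0 mD k1 k2 H.
apply: (@absRint_le D g (fun x => K1 * gk s m1 x + K2 * gk s m2 x) (K1 + K2) H).
have m1f : measurable_fun D (fun x => (K1 * gk s m1 x)%:E).
  apply/measurable_EFinP; apply: measurable_funM; first exact: measurable_cst.
  exact: measurable_funS (measurable_gk s m1 s0).
have m2f : measurable_fun D (fun x => (K2 * gk s m2 x)%:E).
  apply/measurable_EFinP; apply: measurable_funM; first exact: measurable_cst.
  exact: measurable_funS (measurable_gk s m2 s0).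
under eq_integral do rewrite EFinD.
rewrite ge0_integralD //.
- by rewrite EFinD; apply: leeD; exact: int_Kgk_le.
- by move=> x _; rewrite lee_fin; apply: mulr_ge0 => //; apply: gk_ge0; exact: ltW.
- by move=> x _; rewrite lee_fin; apply: mulr_ge0 => //; apply: gk_ge0; exact: ltW.
Qed.

Lemma E_gk (t m x : R) : 0 < t -> E t (x - m) = Num.sqrt pi / t * gk t m x.
Proof.
move=> t0; have sp := sqrtpi_gt0; rewrite /gk.
by field; rewrite !gt_eqF.
Qed.

Lemma powR32 (t : R) : 0 < t -> t `^ (3 / 2) = t * Num.sqrt t.
Proof.
move=> t0; rewrite (_ : 3 / 2 = 1 + 2^-1); last by field.
rewrite powRD; last by rewrite gt_eqF // implybT.
by rewrite powRr1 ?ltW // powR12_sqrt // ltW.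
Qed.

Theorem proposition3p4 :
  exists C : RR, 0 < C /\
    forall a b t : RR, 0 <= a -> a <= b -> 0 < t ->
      `| R_I t a b | <= C / t /\
      (b <= 4^-1 ->
        `| R_I t a b | <=
          C * expR (- (3 / 4 * t ^+ 2 * (4^-1 - b) ^+ 2)) / t `^ (3 / 2)).
Proof.
have sp := sqrtpi_gt0.
have sp1 : 1 <= Num.sqrt (pi : R).
  by rewrite -sqrtr1 ler_sqrt ?pi_ge0 //; have := @pi_ge2 R; lra.
have s2 : 0 < Num.sqrt (2 : R) by rewrite sqrtr_gt0.
have pe : (pi : R) = Num.sqrt pi * Num.sqrt pi by rewrite -expr2 sqr_sqrtr ?pi_ge0.
exists (1 + Num.sqrt pi * Num.sqrt 2); split.
  by apply: addr_gt0 => //; exact: mulr_gt0.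
move=> a b t a0 ab t0.
set G := fun lam : R => (f_t t a b lam - \1_(`[a, b]) lam) * tanh (pi * Num.sqrt (lam - 4^-1)).
have RI : R_I t a b = (4 * pi)^-1 * Rintegral mu `[4^-1, +oo[ G by [].
have i4 : 0 < (4 * pi : R)^-1 by rewrite invr_gt0 mulr_gt0 ?pi_gt0.
rewrite RI normrM (gtr0_norm i4).
split.
  have H1 : `|Rintegral mu `[4^-1, +oo[ G| <= Num.sqrt pi / t + Num.sqrt pi / t.
    apply: (@absRint_gk2 _ _ t a b) => //; try by rewrite divr_ge0 // ltW.
    move=> lam _; rewrite /G normrM.
    apply: le_trans (ler_wpM2l (normr_ge0 _) (tanh_le1 _)) _.
    by rewrite mulr1 -!E_gk //; exact: diff_bound.
  apply: le_trans (ler_wpM2l (ltW i4) H1) _.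
  have -> : (4 * pi)^-1 * (Num.sqrt pi / t + Num.sqrt pi / t) = (2 * Num.sqrt pi)^-1 / t.
    by rewrite [X in (4 * X)^-1]pe; set q := Num.sqrt pi; field; rewrite !gt_eqF.
  apply: ler_wpM2r; first by rewrite invr_ge0 ltW.
  have : (2 * Num.sqrt pi : R)^-1 <= 1.
    have h2 : (0:R) < 2 * Num.sqrt pi by apply: mulr_gt0.
    by rewrite (@invf_le1 R _ h2); move: sp1; clear; lra.
  have : (0 : R) <= Num.sqrt pi * Num.sqrt 2 by apply: mulr_ge0; exact: ltW.
  clear; lra.
move=> b4.
set d := 4^-1 - b.
have d0 : 0 <= d by rewrite /d subr_ge0.
set s := t / Num.sqrt 2.
have s0 : 0 < s by rewrite divr_gt0.
have st : 0 < Num.sqrt t by rewrite sqrtr_gt0.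
set K := 2 * pi * E t d * (Num.sqrt t)^-1 * (Num.sqrt pi / s).
have K0 : 0 <= K.
  rewrite /K; apply: mulr_ge0; last by rewrite divr_ge0 // ltW.
  apply: mulr_ge0; last by rewrite invr_ge0 ltW.
  by apply: mulr_ge0; [rewrite mulr_ge0 ?pi_ge0 // | exact: expR_ge0].
have H2 : `|Rintegral mu `[4^-1, +oo[ G| <= K + 0.
  apply: (@absRint_gk2 _ _ s (4^-1) b) => //.
  move=> lam; rewrite /= in_itv /= andbT => lam4.
  rewrite mul0r addr0 /G normrM.
  set x := lam - 4^-1.
  have x0 : 0 <= x by rewrite /x subr_ge0.
  have bl : b <= lam by apply: le_trans b4 lam4.
  have e1 := diff_bound_right t a b lam t0 ab bl.
  have e2 : `|tanh (pi * Num.sqrt x)| <= 2 * (pi * Num.sqrt x).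
    by apply: tanh_le2; apply: mulr_ge0; [exact: pi_ge0 | exact: sqrtr_ge0].
  apply: le_trans (ler_pM (normr_ge0 _) (normr_ge0 _) e1 e2) _.
  have e3 : E t (lam - b) <= E t d * E t x.
    rewrite -exp.expRD ler_expR.
    have -> : lam - b = x + d by rewrite /x /d; ring.
    have : 0 <= t ^+ 2 * (x * d) by rewrite mulr_ge0 ?sqr_ge0 ?mulr_ge0.
    nra.
  have e4 := sqrt_gauss t x t0 x0.
  have e5 : E s x = Num.sqrt pi / s * gk s 4^-1 lam := E_gk s 4^-1 lam s0.
  rewrite e5 in e4.
  have sx := sqrtr_ge0 x.
  have ex := expR_ge0 (- (t ^+ 2 * x ^+ 2)).
  have ed := expR_ge0 (- (t ^+ 2 * d ^+ 2)).
  apply: (@le_trans _ _ (E t d * E t x * (2 * (pi * Num.sqrt x)))).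
    apply: ler_wpM2r => //; rewrite mulr_ge0 // mulr_ge0 ?pi_ge0 //.
  rewrite /K.
  have : 0 <= 2 * pi * E t d by rewrite mulr_ge0 // mulr_ge0 ?pi_ge0.
  move: e4; set P := (Num.sqrt t)^-1 * _; move=> e4 h.
  have -> : E t d * E t x * (2 * (pi * Num.sqrt x)) = 2 * pi * E t d * (Num.sqrt x * E t x) by ring.
  have -> : 2 * pi * E t d * (Num.sqrt t)^-1 * (Num.sqrt pi / s) * gk s 4^-1 lam = 2 * pi * E t d * P.
    by rewrite /P; ring.
  exact: ler_wpM2l.
apply: le_trans (ler_wpM2l (ltW i4) H2) _.
rewrite powR32 // addr0.
have -> : (4 * pi)^-1 * K = (E t d * (Num.sqrt pi * Num.sqrt 2 / 2)) / (t * Num.sqrt t).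
  have pn : (pi : R) != 0 by rewrite gt_eqF // pi_gt0.
  rewrite /K /s; move: pn; set p := (pi : R) => pn; field.
  rewrite (gt_eqF st) (gt_eqF t0) (gt_eqF s2) /=.
  apply/eqP => h; move/eqP: pn; apply.
  by rewrite /p /pi mulrS h addr0; rewrite mulr1n in h.
apply: ler_wpM2r; first by rewrite invr_ge0 mulr_ge0 // ltW.
rewrite mulrC; apply: ler_pM.
- by rewrite divr_ge0 // mulr_ge0 // ltW.
- exact: expR_ge0.
- have : (0 : R) <= Num.sqrt pi * Num.sqrt 2 by apply: mulr_ge0; exact: ltW.
  clear; lra.
- rewrite ler_expR.
  have : (0 : R) <= t ^+ 2 * d ^+ 2 by rewrite mulr_ge0 ?sqr_ge0.
  rewrite -/d; clear; lra.
Qed.
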